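(* Let $d\ge2$, $k\in\overline{\mathbb{N}}_\ast^d$ and $\sigma$ a skew-bicharacter of $\mathbb{Z}^d_k$. Let $N,M\in\mathbb{N}_\ast$ with $N+M<\wedge k$, and let $\omega_{N,M}$ be the diagonal operator on $\ell^2(\mathbb{Z}^d)$ with $\omega_{N,M}e_n=w_{N,M}(n)e_n$ for all $n\in\mathbb{Z}^d$. Then $\omega_{N,M}$ is a finite rank operator and, for all $m\in I_k$, \[ \big\|[\omega_{N,M},\pi_{k,\sigma}(\delta_{q_k(m)})]\big\|\le \frac{|m|}{M}, \] the norm being the operator norm on $\ell^2(\mathbb{Z}^d)$.
   Context: $\mathbb{N}_\ast=\{2,3,\ldots\}$, $\overline{\mathbb{N}}_\ast=\mathbb{N}_\ast\cup\{\infty\}$. For $k\in\overline{\mathbb{N}}_\ast^d$: $k\mathbb{Z}^d=\prod_jk_j\mathbb{Z}$ with $\infty\mathbb{Z}=\{0\}$, $\mathbb{Z}^d_k=\mathbb{Z}^d/k\mathbb{Z}^d$, $q_k$ the canonical surjection. A skew-bicharacter of $\mathbb{Z}^d_k$ is a bicharacter $\sigma$ into the unit circle with $\sigma(n,m)=\overline{\sigma(m,n)}$, identified with its lift to $\mathbb{Z}^d$. On $\ell^2(\mathbb{Z}^d_k)$ (basis $e_m$) let $U^n_{k,\sigma}e_m=\sigma(m,n)e_{m-n}$ and $\rho_{k,\sigma}(f)=\sum_nf(n)U^n_{k,\sigma}$ for $f\in\ell^1(\mathbb{Z}^d_k)$; $C^\ast(\mathbb{Z}^d_k,\sigma)$ is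 the norm closure of the image. $\delta_p\in\ell^1(\mathbb{Z}^d_k)$ is the indicator of $\{p\}$. $I_k=\prod_{j=1}^d\{\lfloor\frac{1-k_j}{2}\rfloor,\ldots,\lfloor\frac{k_j-1}{2}\rfloor\}$ (the $j$-th factor is $\mathbb{Z}$ if $k_j=\infty$); $q_k$ restricts to a bijection $I_k\to\mathbb{Z}^d_k$ and $\{I_k+n:n\in k\mathbb{Z}^d\}$ partitions $\mathbb{Z}^d$. The representation $\pi_{k,\sigma}$ of $C^\ast(\mathbb{Z}^d_k,\sigma)$ on $\ell^2(\mathbb{Z}^d)$ (canonical basis $(e_n)_{n\in\mathbb{Z}^d}$) is defined blockwise: for each $n\in k\mathbb{Z}^d$, $\pi_{k,\sigma}(a)$ leaves $H_n=\overline{\mathrm{span}}\{e_j:j\in I_k+n\}$ invariant and acts on it as $W_n\rho_{k,\sigma}(a)W_n^\ast$, where $W_n:\ell^2(\mathbb{Z}^d_k)\to H_n$ is the unitary with $W_ne_{q_k(j)}=e_{j+n}$ for $j\in I_k$. It is a faithful unital *-representation. For $n\in\mathbb{Z}^d$, $|n|=\sum_j|n_j|$; $\wedge k=\min\{|n|:n\in\mathbb{Z}^d\setminus I_k\}\in\overline{\mathbb{N}}_\ast$ ($=\infty$ if $k=\infty^d$). For $N,M\in\mathbb{N}_\ast$, $w_{N,M}(n)=1$ if $|n|\le N$, $=\frac{M+N-|n|}{M}$ if $N\le|n|\le M+N$, and $0$ otherwise. *)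

(* Defs.v *)
From mathcomp Require Import all_boot all_order all_algebra.
From mathcomp Require Import complex.
From mathcomp Require Import classical_sets reals constructive_ereal ereal esum.

Set Implicit Arguments.
Unset Strict Implicit.
Unset Printing Implicit Defensive.

Import Order.TTheory GRing.Theory Num.Theory.
Local Open Scope ring_scope.
Local Open Scope complex_scope.

Notation Zd d := ('rV[int]_d).

(* An extended index k in Nbar_*^d : [None] stands for infinity. *)
Definition kvalid (d : nat) (k : 'I_d -> option nat) : Prop :=
  forall j, match k j with Some kj => (2 <= kj)%N | None => true end.

(* lower and upper ends of the j-th factor of I_k :
   floor((1-kj)/2) and floor((kj-1)/2) (divz floors for a positive divisor) *)
Definition klo (kj : nat) : int := ((1 - kj%:Z) %/ 2)%Z.
Definition khi (kj : nat) : int := ((kj%:Z - 1) %/ 2)%Z.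

Definition inIk (d : nat) (k : 'I_d -> option nat) (n : Zd d) : bool :=
  [forall j, match k j with
             | Some kj => (klo kj <= n ord0 j) && (n ord0 j <= khi kj)
             | None => true end].

Definition inkZ (d : nat) (k : 'I_d -> option nat) (n : Zd d) : bool :=
  [forall j, match k j with
             | Some kj => (kj%:Z %| n ord0 j)%Z
             | None => n ord0 j == 0 end].

(* rep k n : the unique element of I_k congruent to n modulo k Z^d, i.e. the
   element of I_k corresponding to q_k(n) under the bijection I_k -> Z^d_k. *)
Definition rep (d : nat) (k : 'I_d -> option nat) (n : Zd d) : Zd d :=
  \row_j match k j with
         | Some kj => klo kj + ((n ord0 j - klo kj) %% kj%:Z)%Z
         | None => n ord0 j end.

Definition l1 (d : nat) (n : Zd d) : nat := (\sum_(j < d) `|n ord0 j|%N)%N.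

(* "L < wedge k", where wedge k = min{ |n| : n \notin I_k } (= infinity if the
   set is empty, i.e. k = infinity^d): every n outside I_k has |n| > L. *)
Definition lt_wedge (d : nat) (k : 'I_d -> option nat) (L : nat) : Prop :=
  forall n : Zd d, ~~ inIk k n -> (L < l1 n)%N.

(* sigma, lifted to Z^d, is a skew-bicharacter of Z^d_k :
   unimodular, bi-multiplicative, skew, and factoring through the quotient
   Z^d -> Z^d_k (in the first variable; the second follows by skewness). *)
Definition skew_bichar (R : rcfType) (d : nat) (k : 'I_d -> option nat)
    (sigma : Zd d -> Zd d -> R[i]) : Prop :=
  [/\ (forall n m, `|sigma n m| = 1),
      (forall n n' m, sigma (n + n') m = sigma n m * sigma n' m),
      (forall n m m', sigma n (m + m') = sigma n m * sigma n m'),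
      (forall n m, sigma n m = (sigma m n)^*) &
      (forall a n m, inkZ k a -> sigma (n + a) m = sigma n m)].

Definition modsq (R : rcfType) (z : R[i]) : R := complex.Re z ^+ 2 + complex.Im z ^+ 2.

Definition l2sq (R : realType) (d : nat) (x : Zd d -> R[i]) : \bar R :=
  \esum_(n in [set: Zd d]) (modsq (x n))%:E.

Definition inl2 (R : realType) (d : nat) (x : Zd d -> R[i]) : Prop :=
  (l2sq x < +oo)%E.

Definition opnorm_le (R : realType) (d : nat)
    (T : (Zd d -> R[i]) -> (Zd d -> R[i])) (c : R) : Prop :=
  0 <= c /\ forall x, inl2 x -> (l2sq (T x) <= (c ^+ 2)%:E * l2sq x)%E.

Definition finite_rank (R : realType) (d : nat)
    (T : (Zd d -> R[i]) -> (Zd d -> R[i])) : Prop :=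
  (exists c : R, opnorm_le T c) /\
  exists (r : nat) (v : 'I_r -> Zd d -> R[i]),
    (forall i, inl2 (v i)) /\
    forall x, inl2 x -> exists a : 'I_r -> R[i],
        T x = fun n => \sum_(i < r) a i * v i n.

Definition w (R : realType) (N M : nat) (d : nat) (n : Zd d) : R :=
  if (l1 n <= N)%N then 1
  else if (l1 n <= M + N)%N then ((M + N - l1 n)%N)%:R / M%:R
  else 0.

Definition omega (R : realType) (N M : nat) (d : nat) (x : Zd d -> R[i]) :
  Zd d -> R[i] := fun n => (w R N M n)%:C * x n.

(* Elements of l^2(Z^d_k) are modelled as k Z^d-periodic functions on Z^d
   (functions on Z^d_k composed with q_k); e_{q_k(m)} is the indicator of the
   class of m.  rho_{k,sigma}(delta_{q_k(p)}) = U^p, with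
   U^p e_m = sigma(m,p) e_{m-p}, i.e. (U^p g)(m) = sigma(m+p,p) g(m+p). *)
Definition Uop (R : rcfType) (d : nat) (sigma : Zd d -> Zd d -> R[i]) (p : Zd d)
    (g : Zd d -> R[i]) : Zd d -> R[i] :=
  fun m => sigma (m + p) p * g (m + p).

(* W_n : l^2(Z^d_k) -> H_n, W_n e_{q_k(j)} = e_{j+n} (j \in I_k) *)
Definition Wop (R : rcfType) (d : nat) (k : 'I_d -> option nat) (n : Zd d)
    (g : Zd d -> R[i]) : Zd d -> R[i] :=
  fun j => if inIk k (j - n) then g (j - n) else 0.

Definition Wadj (R : rcfType) (d : nat) (k : 'I_d -> option nat) (n : Zd d)
    (x : Zd d -> R[i]) : Zd d -> R[i] :=
  fun m => x (rep k m + n).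

(* pi_{k,sigma}(delta_{q_k(p)}) on l^2(Z^d), defined blockwise: on the block
   H_n (n \in k Z^d) containing e_j, namely n = j - rep k j, it acts as
   W_n rho_{k,sigma}(delta_{q_k(p)}) W_n^*. *)
Definition pi_delta (R : rcfType) (d : nat) (k : 'I_d -> option nat)
    (sigma : Zd d -> Zd d -> R[i]) (p : Zd d) (x : Zd d -> R[i]) : Zd d -> R[i] :=
  fun j => let n := j - rep k j in Wop k n (Uop sigma p (Wadj k n x)) j.

Definition commutator (R : rcfType) (d : nat) (S T : (Zd d -> R[i]) -> (Zd d -> R[i]))
    (x : Zd d -> R[i]) : Zd d -> R[i] :=
  fun n => S (T x) n - T (S x) n.

(* Main.v *)
Require Import Defs.
From mathcomp Require Import all_boot all_order all_algebra.
From mathcomp Require Import complex.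
From mathcomp Require Import classical_sets reals constructive_ereal ereal esum.
From mathcomp Require Import fsbigop.
From mathcomp Require Import zify ring lra.
Import Order.TTheory GRing.Theory Num.Theory.
Set Implicit Arguments.
Unset Strict Implicit.
Local Open Scope ring_scope.

Lemma khi_klo (kj : nat) : khi kj = klo kj + kj%:Z - 1.
Proof.
rewrite /khi /klo.
have h1 := divz_eq (1 - kj%:Z) 2; have h2 := divz_eq (kj%:Z - 1) 2.
have r1 := modz_ge0 (1 - kj%:Z) (isT : (2:int) != 0).
have r2 := modz_ge0 (kj%:Z - 1) (isT : (2:int) != 0).
have s1 := ltz_pmod (1 - kj%:Z) (isT : (0 < 2 :> int)).
have s2 := ltz_pmod (kj%:Z - 1) (isT : (0 < 2 :> int)).
set a := ((1 - kj%:Z) %/ 2)%Z in h1 *; set b := ((kj%:Z - 1) %/ 2)%Z in h2 *.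
set r := ((1 - kj%:Z) %% 2)%Z in h1 r1 s1; set r' := ((kj%:Z - 1) %% 2)%Z in h2 r2 s2.
lia.
Qed.

Definition repc (kj : nat) (x : int) : int := klo kj + ((x - klo kj) %% kj%:Z)%Z.

Lemma repc_in kj x : (2 <= kj)%N -> (klo kj <= repc kj x) && (repc kj x <= khi kj).
Proof.
move=> hk; rewrite /repc khi_klo.
have r1 := modz_ge0 (x - klo kj) (_ : kj%:Z != 0).
have s1 := ltz_pmod (x - klo kj) (_ : 0 < kj%:Z).
have := r1 ltac:(lia); have := s1 ltac:(lia); lia.
Qed.

Lemma repc_id kj x : (2 <= kj)%N -> (klo kj <= x) && (x <= khi kj) -> repc kj x = x.
Proof.
move=> hk; rewrite /repc khi_klo => /andP[h1 h2].
rewrite modz_small; first by lia.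
lia.
Qed.

Lemma repcD kj x a : (kj%:Z %| a)%Z -> repc kj (x + a) = repc kj x.
Proof.
move=> /dvdzP[q ->]; rewrite /repc.
rewrite (_ : x + q * kj%:Z - klo kj = q * kj%:Z + (x - klo kj)) ?modzMDl //.
move: (kj%:Z) (klo kj) => K l; ring.
Qed.

Lemma repc_dvd kj (x : int) : (kj%:Z %| (x - repc kj x))%Z.
Proof.
apply/dvdzP; exists ((x - klo kj) %/ kj%:Z)%Z.
rewrite /repc; have := divz_eq (x - klo kj) kj%:Z.
set q := ((x - klo kj) %/ kj%:Z)%Z; set r := ((x - klo kj) %% kj%:Z)%Z.
move=> h; clearbody q r; move: (kj%:Z) (klo kj) h => K l h.
have -> : r = x - l - q * K by rewrite h; ring.
ring.
Qed.

Section Rep.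
Variables (d : nat) (k : 'I_d -> option nat).
Hypothesis hk : kvalid k.

Lemma rep_in (n : Zd d) : inIk k (rep k n).
Proof.
apply/forallP => j; rewrite mxE; move: (hk j); case: (k j) => [kj|] // h.
exact: repc_in.
Qed.

Lemma rep_id (n : Zd d) : inIk k n -> rep k n = n.
Proof.
move=> /forallP hn; apply/rowP => j; rewrite mxE; move: (hk j) (hn j).
case: (k j) => [kj|] // h1 h2; rewrite [ord0]ord1; exact: repc_id.
Qed.

Lemma rep_rep (n : Zd d) : rep k (rep k n) = rep k n.
Proof. exact/rep_id/rep_in. Qed.

Lemma rep_add (n a : Zd d) : inkZ k a -> rep k (n + a) = rep k n.
Proof.
move=> /forallP ha; apply/rowP => j; rewrite !mxE; move: (ha j).
case: (k j) => [kj|] h; first by rewrite [ord0]ord1; exact: repcD.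
by rewrite [ord0]ord1 (eqP h) addr0.
Qed.

Lemma rep_dvd (n : Zd d) : inkZ k (n - rep k n).
Proof.
apply/forallP => j; rewrite !mxE; case: (k j) => [kj|] /=.
  exact: repc_dvd.
by rewrite subrr.
Qed.

Lemma inkZ_sub (a b : Zd d) : inkZ k a -> inkZ k b -> inkZ k (a - b).
Proof.
move=> /forallP ha /forallP hb; apply/forallP => j; rewrite !mxE.
move: (ha j) (hb j); case: (k j) => [kj|] h1 h2.
  exact: rpredB.
by rewrite (eqP h1) (eqP h2) subrr.
Qed.

Lemma rep_uniq (a b : Zd d) : inIk k a -> inIk k b -> inkZ k (a - b) -> a = b.
Proof.
move=> ha hb hab.
have := rep_add b hab; rewrite (addrC b) subrK => e.
by rewrite -(rep_id ha) -(rep_id hb).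
Qed.

End Rep.

Ltac vec := apply/rowP => ?; rewrite !mxE; ring.

Section Fm.
Variables (d : nat) (k : 'I_d -> option nat) (p : Zd d).
Hypothesis hk : kvalid k.

Definition fm (j : Zd d) : Zd d := rep k (rep k j + p) + (j - rep k j).

Lemma rep_fm j : rep k (fm j) = rep k (rep k j + p).
Proof. by rewrite /fm rep_add ?rep_rep //; exact: rep_dvd. Qed.

Lemma fm_rep j : fm j - rep k (fm j) = j - rep k j.
Proof. by rewrite rep_fm /fm (addrC (rep k _)) addrK. Qed.

Lemma fm_inj : injective fm.
Proof.
move=> a b e.
have hn : a - rep k a = b - rep k b by rewrite -fm_rep e fm_rep.
have hr : rep k (rep k a + p) = rep k (rep k b + p) by rewrite -!rep_fm e.
have hab : rep k a = rep k b.
  apply: rep_uniq => //; try exact: rep_in.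
  have := inkZ_sub (rep_dvd k (rep k a + p)) (rep_dvd k (rep k b + p)).
  rewrite hr; move: (rep k (rep k b + p)) => r; move: (rep k a) (rep k b) => u v.
  by rewrite (_ : u + p - r - (v + p - r) = u - v) //; vec.
have -> : a = (a - rep k a) + rep k a by rewrite subrK.
have -> : b = (b - rep k b) + rep k b by rewrite subrK.
by rewrite hn hab.
Qed.

End Fm.

Section W.
Variables (R : realType) (N M d : nat) (k : 'I_d -> option nat).
Hypothesis hM : (0 < M)%N.
Hypothesis hk : kvalid k.
Hypothesis hw : lt_wedge k (N + M).

Definition gM (L : nat) : nat :=
  if (L <= N)%N then M else if (L <= M + N)%N then (M + N - L)%N else 0%N.

Lemma wE (n : Zd d) : w R N M n = (gM (l1 n))%:R / M%:R.
Proof.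
rewrite /w /gM; case: ifP => _; first by rewrite divff // pnatr_eq0 -lt0n.
by case: ifP => _ //; rewrite mul0r.
Qed.

Lemma l1_tri (a b : Zd d) : (l1 a <= l1 b + l1 (a - b))%N.
Proof. rewrite /l1 -big_split /=; apply: leq_sum => j _; rewrite !mxE; move: (a ord0 j) (b ord0 j) => x y; lia. Qed.

Lemma l1_sym (a b : Zd d) : l1 (a - b) = l1 (b - a).
Proof. by apply: eq_bigr => j _; rewrite !mxE -opprB abszN. Qed.

Lemma l1_opp (a : Zd d) : l1 (- a) = l1 a.
Proof. by apply: eq_bigr => j _; rewrite !mxE abszN. Qed.

Lemma gM_lip La Lb D : (Lb <= La + D)%N -> (gM La <= gM Lb + D)%N.
Proof.
rewrite /gM; case: (leqP La N); case: (leqP La (M+N)); case: (leqP Lb N);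
  case: (leqP Lb (M+N)); lia.
Qed.

Lemma w_lip (a b : Zd d) : w R N M a <= w R N M b + (l1 (a - b))%:R / M%:R.
Proof.
rewrite !wE -mulrDl ler_wpM2r ?invr_ge0 ?ler0n // -natrD ler_nat; apply: gM_lip.
by have := l1_tri b a; rewrite l1_sym.
Qed.

Lemma w_ge0 (a : Zd d) : 0 <= w R N M a.
Proof. by rewrite wE divr_ge0 ?ler0n. Qed.

Lemma w_le1 (a : Zd d) : w R N M a <= 1.
Proof.
rewrite wE ler_pdivrMr ?ltr0n // mul1r ler_nat /gM.
case: ifP => //; case: ifP => //; lia.
Qed.

Lemma w_out (a : Zd d) : ~~ inIk k a -> w R N M a = 0.
Proof.
move=> /hw h; rewrite /w ifF ?ifF //; apply/negbTE; rewrite -ltnNge; lia.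
Qed.

Lemma w_in (a : Zd d) : w R N M a != 0 -> inIk k a.
Proof. by apply: contraR => /w_out ->; rewrite eqxx. Qed.

Lemma key (p j : Zd d) :
  `|w R N M j - w R N M (fm k p j)| <= (l1 p)%:R / M%:R.
Proof.
set c := (l1 p)%:R / M%:R.
have c0 : 0 <= c by rewrite divr_ge0 ?ler0n.
have H1 : forall a, w R N M (a + p) = 0 -> w R N M a <= c.
  move=> a h; have := w_lip a (a + p).
  by rewrite h add0r opprD addrA subrr add0r l1_opp.
have H2 : forall a, w R N M (a - p) = 0 -> w R N M a <= c.
  move=> a h; have := w_lip a (a - p).
  by rewrite h add0r opprB addrC subrK.
suff [E|[h1 h2]] : fm k p j = j + p \/ (w R N M j <= c /\ w R N M (fm k p j) <= c).
- rewrite E; have := w_lip j (j + p); have := w_lip (j + p) j.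
  rewrite opprD addrA subrr add0r l1_opp (addrC j) addrK -/c => h1 h2.
  rewrite ler_norml; apply/andP; split; lra.
- have := w_ge0 j; have := w_ge0 (fm k p j) => g1 g2.
  rewrite ler_norml; apply/andP; split; lra.
case hA: (inIk k j && inIk k (j + p)).
  left; move/andP: hA => [h1 h2].
  by rewrite /fm (rep_id hk h1) (rep_id hk h2) subrr addr0.
case hB: (inIk k (fm k p j) && inIk k (fm k p j - p)).
  left; move/andP: hB => [h1 h2]; set y := fm k p j.
  have e1 : y - p = rep k j.
    apply: rep_uniq => //; first exact: rep_in.
    have := inkZ_sub (rep_dvd k j) (rep_dvd k (rep k j + p)); rewrite /y /fm.
    move: (rep k (rep k j + p)) => r; move: (rep k j) => u.
    by rewrite (_ : j - u - (u + p - r) = r + (j - u) - p - u) //; vec.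
  have ey : y = rep k j + p by rewrite -e1 subrK.
  have e2 : rep k (rep k j + p) = rep k j + p by rewrite rep_id // -ey.
  by rewrite /y /fm e2; move: (rep k j) => u; vec.
right; split.
  case hj: (inIk k j).
    apply: H1; apply: w_out; by rewrite hj /= in hA; rewrite hA.
  by rewrite w_out ?hj.
case hy: (inIk k (fm k p j)).
  apply: H2; apply: w_out; by rewrite hy /= in hB; rewrite hB.
by rewrite w_out ?hy.
Qed.

End W.

Local Open Scope complex_scope.

Section Analysis.
Variable R : realType.

Lemma modsqM (a b : R[i]) : modsq (a * b) = modsq a * modsq b.
Proof. by case: a => a1 a2; case: b => b1 b2; rewrite /modsq /=; ring. Qed.

Lemma modsq_ge0 (a : R[i]) : 0 <= modsq a.
Proof. by rewrite /modsq addr_ge0 ?sqr_ge0. Qed.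

Lemma modsq_real (r : R) : modsq r%:C = r ^+ 2.
Proof. by rewrite /modsq /= expr0n /= addr0. Qed.

Lemma modsq1 (s : R[i]) : `|s| = 1 -> modsq s = 1.
Proof.
move=> h; apply: (@complexI R); rewrite /modsq add_Re2_Im2 h expr1n //.
Qed.

Lemma esum_scale (T : choiceType) (c : R) (g : T -> R) : 0 <= c ->
  (forall i, 0 <= g i) ->
  (\esum_(i in [set: T]) (c * g i)%:E <= c%:E * \esum_(i in [set: T]) (g i)%:E)%E.
Proof.
move=> c0 g0; apply: ge_ereal_sup => _ [X [finX _] <-].
rewrite fsbig_finite //.
rewrite (eq_bigr (fun i => c%:E * (g i)%:E)%E); last by move=> i _; rewrite EFinM.
rewrite -ge0_sume_distrr; last by move=> i _; rewrite lee_fin.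
apply: lee_wpmul2l; first by rewrite lee_fin.
by apply: ereal_sup_ubound; exists X => //; rewrite fsbig_finite.
Qed.

Lemma esum_inj_le (T : choiceType) (f : T -> T) (g : T -> \bar R) :
  injective f -> (forall i, (0 <= g i)%E) ->
  (\esum_(i in [set: T]) g (f i) <= \esum_(i in [set: T]) g i)%E.
Proof.
move=> fi g0; rewrite -(esum_image setT f g); last by move=> a b _ _; apply: fi.
rewrite esum_mkcond; apply: le_esum => i _; case: ifP => // _; exact: g0.
Qed.

End Analysis.

Lemma pi_eq (R : realType) d (k : 'I_d -> option nat) (hk : kvalid k)
   (sigma : Zd d -> Zd d -> R[i]) p x j :
  pi_delta k sigma p x j = sigma (rep k j + p) p * x (fm k p j).
Proof.
rewrite /pi_delta /Wop /Uop /Wadj /=.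
have e : j - (j - rep k j) = rep k j by rewrite opprB addrC subrK.
by rewrite e rep_in.
Qed.

Lemma comm_modsq (R : realType) N M d (k : 'I_d -> option nat) (hk : kvalid k)
   (sigma : Zd d -> Zd d -> R[i]) (hs : forall n m, `|sigma n m| = 1) p x j :
  modsq (commutator (@omega R N M d) (pi_delta k sigma p) x j) =
  (w R N M j - w R N M (fm k p j)) ^+ 2 * modsq (x (fm k p j)).
Proof.
rewrite /commutator /omega !pi_eq //.
move: (sigma _ _) (hs (rep k j + p) p) (x (fm k p j)) (w R N M j) (w R N M (fm k p j)).
move=> s hs1 X a b.
rewrite (_ : a%:C * (s * X) - s * (b%:C * X) = s * ((a - b)%:C * X)); last first.
  by rewrite rmorphB /=; ring.
by rewrite !modsqM modsq_real (modsq1 hs1) mul1r.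
Qed.

Lemma rc0 (R : realType) : (0 : R)%:C = 0. Proof. by []. Qed.

Unset Implicit Arguments.
Set Strict Implicit.

Theorem mainTheorem2 (R : realType) (d : nat) (k : 'I_d -> option nat)
    (sigma : Zd d -> Zd d -> R[i]) (N M : nat) :
  (2 <= d)%N -> kvalid k -> skew_bichar k sigma ->
  (2 <= N)%N -> (2 <= M)%N -> lt_wedge k (N + M) ->
  finite_rank (@omega R N M d) /\
  forall m : Zd d, inIk k m ->
    opnorm_le (commutator (@omega R N M d) (pi_delta k sigma m))
              ((l1 m)%:R / M%:R).
Proof.
move=> hd hk [hs _ _ _ _] hN hM2 hw.
have hM : (0 < M)%N by lia.
split; last first.
  move=> m _; set c := (l1 m)%:R / M%:R.
  have c0 : 0 <= c by rewrite divr_ge0 ?ler0n.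
  split => // x _; rewrite /l2sq.
  apply: (@le_trans _ _ (\esum_(n in [set: Zd d]) ((c ^+ 2 * modsq (x (fm k m n)))%:E))%E).
    apply: le_esum => n _; rewrite lee_fin comm_modsq //.
    apply: ler_wpM2r; first exact: modsq_ge0.
    have := @key R N M d k hM hk hw m n; move: (_ - _) => t; rewrite ler_norml => /andP[h1 h2]; rewrite -/c in h1 h2; nra.
  apply: (@le_trans _ _ (\esum_(n in [set: Zd d]) ((c ^+ 2 * modsq (x n))%R%:E))%E).
    apply: (@esum_inj_le _ _ (fm k m) (fun n => ((c ^+ 2 * modsq (x n))%R)%:E)).
      exact: fm_inj.
    by move=> n; rewrite lee_fin mulr_ge0 ?sqr_ge0 ?modsq_ge0.
  by apply: esum_scale; [exact: sqr_ge0 | move=> ?; exact: modsq_ge0].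
split.
  exists 1; split; first exact: ler01.
  move=> x _; rewrite expr1n mul1e; apply: le_esum => n _.
  rewrite lee_fin /omega modsqM modsq_real.
  have := @w_ge0 R N M d hM n; have := @w_le1 R N M d hM n; have := modsq_ge0 (x n).
  move: (w R N M n) (modsq (x n)) => a b h1 h2 h3.
  have h4 : a ^+ 2 <= 1 by nra.
  by rewrite -[X in _ <= X]mul1r ler_wpM2r.
set L := (N + M)%N.
pose T := {ffun 'I_d -> 'I_(2 * L).+1}.
pose pt (u : T) : Zd d := \row_j ((u j : nat)%:Z - L%:Z).
exists #|T|, (fun i n => if n == pt (enum_val i) then 1 else 0); split.
  move=> i; rewrite /inl2 /l2sq.
  rewrite (eq_esum (b := fun n : Zd d => if n \in [set pt (enum_val i)]%classic then 1%:E else 0%E)); last first.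
    move=> n _; case: eqVneq => [->|ne].
      by rewrite mem_set // /modsq /= expr1n expr0n addr0.
    rewrite memNset; last by move=> /= e; rewrite e eqxx in ne.
    by rewrite /modsq /= expr0n addr0.
  by rewrite -esum_mkcond esum_set1 //= ltry.
move=> x _; exists (fun i => (w R N M (pt (enum_val i)))%:C * x (pt (enum_val i))).
apply: boolp.funext => n /=.
rewrite (_ : \sum_(i < #|T|) _ = \sum_(u in T) (w R N M (pt u))%:C * x (pt u) *
    (if n == pt u then 1 else 0)); last first.
  by rewrite [RHS]big_enum_val.
case: (eqVneq (w R N M n) 0) => [w0|wn0].
  rewrite /omega w0 rc0 mul0r big1 // => u _; case: eqP => [e|_].
    by rewrite -e w0 rc0 !mul0r.
  by rewrite mulr0.
have hl : (l1 n <= L)%N.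
  move: wn0; rewrite /w; case: (leqP (l1 n) N) => h1; first by lia.
  case: (leqP (l1 n) (M + N)) => h2; first by lia.
  by rewrite eqxx.
have hj : forall j, (`|n ord0 j| <= L)%N.
  move=> j; apply: leq_trans hl; rewrite /l1 (bigD1 j) //=; exact: leq_addr.
pose u0 : T := [ffun j => inord (absz (n ord0 j + L%:Z)%R)].
have hu0 : pt u0 = n.
  apply/rowP => j; rewrite !mxE ffunE inordK; last first.
    by have := hj j; move: (n ord0 j) => z; lia.
  by have := hj j; move: (n ord0 j) => z; lia.
have ptinj : injective pt.
  move=> u v e; apply/ffunP => j; apply/val_inj.
  have := congr1 (fun z : Zd d => z ord0 j) e; rewrite !mxE /=.
  by move: (nat_of_ord (u j)) (nat_of_ord (v j)) => a b; lia.
rewrite (bigD1 u0) //= hu0 eqxx mulr1 big1 ?addr0 //.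
move=> u hu; rewrite ifF ?mulr0 //; apply/negbTE; apply: contra hu => /eqP e.
by apply/eqP; apply: ptinj; rewrite hu0 e.
Qed.
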